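(* There exist $a^*\in(0,1/10]$ and $L^*\in(0,1/6)$ with the following properties. Suppose $\Gamma_0^+$ is an $L^*$-flat arc in the upper half-wedge $V_{a^*}\cap\{y>0\}$ whose left endpoint lies on the NW face and whose right endpoint lies on the line $x=2$. Then $\mathbf{W}_+(\Gamma_0^+)$ contains an $L^*$-flat arc $\Gamma_1$ in $V_{a^*}\cap\{y>0\}$ with left endpoint on the NW face and right endpoint on the NE face, and $$\max_{(x,y)\in\Gamma_1}y<\tfrac14\min_{(x,y)\in\Gamma_0^+}y.$$ Moreover, writing $\Gamma_0^+=\{(x,f(x))\}$ and letting the endpoints of $\Gamma_1$ be $\mathbf{W}_+(x_1,f(x_1))$ and $\mathbf{W}_+(x_2,f(x_2))$, the function $\phi(x)=$ first coordinate of $\mathbf{W}_+(x,f(x))$ satisfies $\phi'(x)>1$ for all $x$ between $x_1$ and $x_2$. The analogous statements hold for $\mathbf{W}_-$ acting on an $L^*$-flat arc $\Gamma_0^-$ in the upper half-wedge with left endpoint on the line $x=2$ and right endpoint on the NE face; and, by symmetry under $y\mapsto-y$, analogous statements hold in the lower half-wedge (with $\max y$, $\min y$ replaced by $\max|y|$, $\min|y|$ and NW, NE replaced by SW, SE).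
   Context: For $x>0$, $y\in\mathbb{R}$ let $r_1^2=4+x^2+4x^2y^2$, $\Delta=((x+2)^2+8x^2y^2)((x-2)^2+8x^2y^2)$ and $\omega_\pm(x,y)=\frac{x^2-4\pm\sqrt{\Delta}}{2r_1^2}$. Let $R=\{(x,y): x>0,\ 4-4y^2-x^2y^2-8x^2y^4\ge 0\}$, $R_+=R\cap((0,2]\times\mathbb{R})$, $R_-=R\cap([2,\infty)\times\mathbb{R})$, and $\mathbf{W}_\pm(x,y)=\left(\frac{1+\omega_\pm}{1-\omega_\pm}x,\ \frac{|\omega_\pm|}{1+\omega_\pm}y\right)$ on $R_\pm$. For $0<a\le1/10$, the wedge $V_a=\{(x,y): |y|\le a,\ |y|\ge|x-2|/10\}$; its NW face is $\{y=(2-x)/10,\ 0<y\le a\}$, NE face $\{y=(x-2)/10,\ 0<y\le a\}$, SW face $\{-y=(2-x)/10,\ 0<-y\le a\}$, SE face $\{-y=(x-2)/10,\ 0<-y\le a\}$. An $L$-flat arc in $V_a$ is a graph $\{(x,f(x)):x\in I\}\subset V_a$ of an $L$-Lipschitz function $f:I\to\mathbb{R}$ on a compact interval $I$. *)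

(* Defs.v *)
From Stdlib Require Import Reals Lra.
Open Scope R_scope.

Definition r1sq (x y : R) : R := 4 + x ^ 2 + 4 * x ^ 2 * y ^ 2.
Definition Delta (x y : R) : R :=
  ((x + 2) ^ 2 + 8 * x ^ 2 * y ^ 2) * ((x - 2) ^ 2 + 8 * x ^ 2 * y ^ 2).
Definition omega_p (x y : R) : R := (x ^ 2 - 4 + sqrt (Delta x y)) / (2 * r1sq x y).
Definition omega_m (x y : R) : R := (x ^ 2 - 4 - sqrt (Delta x y)) / (2 * r1sq x y).

Definition inRegion (x y : R) : Prop :=
  0 < x /\ 0 <= 4 - 4 * y ^ 2 - x ^ 2 * y ^ 2 - 8 * x ^ 2 * y ^ 4.
Definition inRp (x y : R) : Prop := inRegion x y /\ x <= 2.
Definition inRm (x y : R) : Prop := inRegion x y /\ 2 <= x.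

(* W_pm given by the explicit formula (total function; intended on R_pm). *)
Definition Wgen (om x y : R) : R * R :=
  ((1 + om) / (1 - om) * x, Rabs om / (1 + om) * y).
Definition Wp (x y : R) : R * R := Wgen (omega_p x y) x y.
Definition Wm (x y : R) : R * R := Wgen (omega_m x y) x y.

Definition Vwedge (a x y : R) : Prop := Rabs y <= a /\ Rabs (x - 2) / 10 <= Rabs y.
Definition upperV (a x y : R) : Prop := Vwedge a x y /\ 0 < y.
Definition lowerV (a x y : R) : Prop := Vwedge a x y /\ y < 0.
Definition NWface (a x y : R) : Prop := y = (2 - x) / 10 /\ 0 < y <= a.
Definition NEface (a x y : R) : Prop := y = (x - 2) / 10 /\ 0 < y <= a.
Definition SWface (a x y : R) : Prop := - y = (2 - x) / 10 /\ 0 < - y <= a.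
Definition SEface (a x y : R) : Prop := - y = (x - 2) / 10 /\ 0 < - y <= a.
Definition line2 (x y : R) : Prop := x = 2.

Definition flat_arc_in (L : R) (S : R -> R -> Prop) (f : R -> R) (p q : R) : Prop :=
  p <= q /\
  (forall x y, p <= x <= q -> p <= y <= q -> Rabs (f x - f y) <= L * Rabs (x - y)) /\
  (forall x, p <= x <= q -> S x (f x)).

(* The property asserted for one map W acting on arcs in the half-wedge H:
   - Gamma_0 = graph of f on [p,q], L-flat in H, left endpoint on face LF0,
     right endpoint on face RF0;
   - then W(Gamma_0) contains Gamma_1 = graph of g on [p1,q1], L-flat in H,
     left endpoint on LF1, right endpoint on RF1;
   - max over Gamma_1 of ht(y) < 1/4 min over Gamma_0 of ht(y)
     (written pointwise; max/min are attained on these compact arcs);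
   - if W(x1,f x1), W(x2,f x2) are the endpoints of Gamma_1, then
     phi(x) = fst (W(x, f x)) has derivative > 1 at every x strictly between
     x1 and x2 where phi is differentiable. *)
Definition transfer_property (L : R) (W : R -> R -> R * R) (H : R -> R -> Prop)
  (LF0 RF0 LF1 RF1 : R -> R -> Prop) (ht : R -> R) : Prop :=
  forall (f : R -> R) (p q : R),
    flat_arc_in L H f p q -> LF0 p (f p) -> RF0 q (f q) ->
    exists (g : R -> R) (p1 q1 : R),
      flat_arc_in L H g p1 q1 /\
      (forall x, p1 <= x <= q1 -> exists t, p <= t <= q /\ W t (f t) = (x, g x)) /\
      LF1 p1 (g p1) /\ RF1 q1 (g q1) /\
      (forall x t, p1 <= x <= q1 -> p <= t <= q -> ht (g x) < / 4 * ht (f t)) /\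
      (forall x1 x2, p <= x1 <= q -> p <= x2 <= q ->
         W x1 (f x1) = (p1, g p1) -> W x2 (f x2) = (q1, g q1) ->
         forall x l, Rmin x1 x2 < x < Rmax x1 x2 ->
           derivable_pt_lim (fun t => fst (W t (f t))) x l -> 1 < l).

(* Main.v *)
Require Import Defs.
From Stdlib Require Import Reals.
From Stdlib Require Import Lra Psatz ClassicalEpsilon FunctionalExtensionality.
Open Scope R_scope.


Definition Rel (x y w : R) : Prop :=
  x^2 * ((1-w)*(w + 4*y^2*(1+w))) = 4*w*(1+w).

Lemma Delta_eq x y : Defs.Delta x y = (x^2-4)^2 + (8*x^2*y^2)*(2*r1sq x y).
Proof. unfold Defs.Delta, r1sq. ring. Qed.

Lemma sqrtD_facts x y : 0 < x -> y <> 0 ->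
  let r := sqrt (Defs.Delta x y) in 0 <= r /\ r^2 = Defs.Delta x y /\ Rabs (x^2-4) < r /\ r < 3*x^2+4+8*x^2*y^2.
Proof.
  intros Hx Hy r.
  assert (HD: 0 <= Defs.Delta x y) by (unfold Defs.Delta; pose proof (pow2_ge_0 (x*y)); pose proof (pow2_ge_0 (x+2)); pose proof (pow2_ge_0 (x-2)); apply Rmult_le_pos; nra).
  assert (Hr0: 0 <= r) by apply sqrt_pos.
  assert (Hr2: r^2 = Defs.Delta x y) by (unfold r; simpl; rewrite Rmult_1_r; apply sqrt_sqrt; auto).
  assert (Hy2: 0 < y^2) by (pose proof (pow_lt (y*y) 1); pose proof (Rsqr_pos_lt y Hy); unfold Rsqr in *; simpl in *; nra).
  assert (Hx2: 0 < x^2) by nra.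
  rewrite Delta_eq in Hr2. unfold r1sq in Hr2.
  assert (HA: 0 < (8*x^2*y^2)*(2*(4 + x ^ 2 + 4 * x ^ 2 * y ^ 2))) by
    (apply Rmult_lt_0_compat; nra).
  split; auto. split. { rewrite Delta_eq; unfold r1sq; auto. }
  split.
  - unfold Rabs; destruct (Rcase_abs (x^2-4)); nra.
  - nra.
Qed.

Lemma omega_p_facts x y : 0 < x -> y <> 0 -> 0 < omega_p x y /\ Rel x y (omega_p x y).
Proof.
  intros Hx Hy. destruct (sqrtD_facts x y Hx Hy) as (H0 & H2 & H3 & H4).
  set (r := sqrt (Defs.Delta x y)) in *.
  assert (Hy2: 0 < y^2) by (pose proof (pow_lt (y*y) 1); pose proof (Rsqr_pos_lt y Hy); unfold Rsqr in *; simpl in *; nra).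
  assert (HB: 0 < 2 * r1sq x y) by (unfold r1sq; nra).
  assert (Hw: omega_p x y * (2 * r1sq x y) = x^2 - 4 + r).
  { unfold omega_p. fold r. field. lra. }
  split.
  - unfold omega_p. fold r. apply Rdiv_lt_0_compat; auto.
    unfold Rabs in H3; destruct (Rcase_abs (x^2-4)); lra.
  - set (w := omega_p x y) in *. unfold Rel.
    rewrite Delta_eq in H2.
    set (B := 2 * r1sq x y) in *.
    assert (E1: (w*B - (x^2-4))^2 = (x^2-4)^2 + (8*x^2*y^2)*B) by (rewrite Hw; lra).
    assert (E2: B * (B*w^2 - 2*(x^2-4)*w - 8*x^2*y^2) = 0) by nra.
    assert (E3: B*w^2 - 2*(x^2-4)*w - 8*x^2*y^2 = 0).
    { destruct (Rmult_integral _ _ E2); auto; lra. }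
    unfold B, r1sq in E3. nra.
Qed.

Lemma omega_m_facts x y : 0 < x -> y <> 0 -> -1 < omega_m x y < 0 /\ Rel x y (omega_m x y).
Proof.
  intros Hx Hy. destruct (sqrtD_facts x y Hx Hy) as (H0 & H2 & H3 & H4).
  set (r := sqrt (Defs.Delta x y)) in *.
  assert (Hy2: 0 < y^2) by (pose proof (pow_lt (y*y) 1); pose proof (Rsqr_pos_lt y Hy); unfold Rsqr in *; simpl in *; nra).
  assert (HB: 0 < 2 * r1sq x y) by (unfold r1sq; nra).
  assert (Hw: omega_m x y * (2 * r1sq x y) = x^2 - 4 - r).
  { unfold omega_m. fold r. field. lra. }
  split.
  - set (w := omega_m x y) in *. set (B := 2 * r1sq x y) in *.
    assert (x^2 - 4 - r < 0) by (unfold Rabs in H3; destruct (Rcase_abs (x^2-4)); lra).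
    assert (- B < x^2 - 4 - r) by (unfold B, r1sq; lra).
    split; nra.
  - set (w := omega_m x y) in *. unfold Rel.
    rewrite Delta_eq in H2.
    set (B := 2 * r1sq x y) in *.
    assert (E1: (w*B - (x^2-4))^2 = (x^2-4)^2 + (8*x^2*y^2)*B) by (rewrite Hw; lra).
    assert (E2: B * (B*w^2 - 2*(x^2-4)*w - 8*x^2*y^2) = 0) by nra.
    assert (E3: B*w^2 - 2*(x^2-4)*w - 8*x^2*y^2 = 0).
    { destruct (Rmult_integral _ _ E2); auto; lra. }
    unfold B, r1sq in E3. nra.
Qed.

Lemma Rel_X x1 x2 y w1 w2 : Rel x1 y w1 -> Rel x2 y w2 ->
  (x2^2 - x1^2) * ((1-w2)*(w2 + 4*y^2*(1+w2))) =
  (w2 - w1) * (4*(1+w1+w2) - x1^2*(1-(1+4*y^2)*(w1+w2))).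
Proof. unfold Rel; intros E1 E2. lra. Qed.

Lemma Rel_Y x y1 y2 w1 w2 : Rel x y1 w1 -> Rel x y2 w2 ->
  (w2 - w1) * (x^2 - 4 - (x^2 + 4 + 4*x^2*y2^2)*(w1+w2)) =
  - 4 * x^2 * (1 - w1^2) * (y2^2 - y1^2).
Proof. unfold Rel; intros E1 E2. lra. Qed.


Lemma P_end y w : 0 < y <= /1000000 -> 0 < w -> w <= 3/2*y -> Rel (2 - 10*y) y w -> w <= y/2.
Proof.
  unfold Rel; intros [Hy Ha] Hw Hwu E.
  assert (Hz: (2 - 10*y)^2 <= 4 - 39*y) by nra.
  set (H := (1-w)*(w + 4*y^2*(1+w))) in *.
  assert (HH: 0 < H) by (unfold H; apply Rmult_lt_0_compat; nra).
  assert (Q: 4*w*(1+w) <= (4 - 39*y) * H) by nra.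
  assert (HX: H <= w - w^2 + 4*y^2) by (unfold H; nra).
  assert (Q2: 4*w*(1+w) <= (4 - 39*y) * (w - w^2 + 4*y^2)) by nra.
  clear Q HX E Hz HH H.
  destruct (Rle_or_lt w (y/2)) as [h|h]; auto. exfalso.
  assert (w*w >= 1/4*(y*y)) by nra.
  assert (y*w >= 1/2*(y*y)) by nra.
  assert (y*w*w <= 3/2*(y*y*w)) by nra.
  assert (y*y*w <= 3/2*(y*y*y)) by nra.
  assert (y*y*y <= /1000000 * (y*y)) by nra.
  assert (0 <= y*w*w) by nra.
  nra.
Qed.

Lemma P_X x1 x2 y w1 w2 : 0 < y <= /1000000 -> x1 <= 2 -> 2 - x1 <= 21/2*y ->
  x2 <= 2 -> 2 - x2 <= 21/2*y -> 3/10*y <= w1 <= 3/2*y -> 3/10*y <= w2 <= 3/2*y ->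
  Rel x1 y w1 -> Rel x2 y w2 -> x1 <= x2 ->
  /100*(x2-x1) <= w2 - w1 <= 3*(x2-x1).
Proof.
  intros [Hy Ha] Hx1 Hx1' Hx2 Hx2' [Hw1 Hw1'] [Hw2 Hw2'] E1 E2 Hle.
  pose proof (Rel_X _ _ _ _ _ E1 E2) as I.
  set (H2 := (1-w2)*(w2 + 4*y^2*(1+w2))) in *.
  set (Bk := 4*(1+w1+w2) - x1^2*(1-(1+4*y^2)*(w1+w2))) in *.
  assert (Hz1: x1^2 <= 4) by nra.
  assert (Hz1': 4 - 42*y <= x1^2) by nra.
  assert (HBe: Bk = (4 - x1^2) + (w1+w2)*(4 + x1^2*(1+4*y^2))) by (unfold Bk; ring).
  assert (HK1: 79/10 <= 4 + x1^2*(1+4*y^2)) by nra.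
  assert (HK2: 4 + x1^2*(1+4*y^2) <= 81/10) by nra.
  assert (Hz3: 4 - x1^2 <= 42*y) by nra.
  assert (HBk1: 12/5*y <= Bk) by (rewrite HBe; nra).
  assert (HBk2: Bk <= 663/10*y) by (rewrite HBe; nra).
  assert (HH1: 29/100*y <= H2) by (unfold H2; nra).
  assert (HH2: H2 <= 8/5*y) by (unfold H2; nra).
  assert (I2: (x2-x1)*((x1+x2)*H2) = (w2-w1)*Bk) by (rewrite <- I; ring).
  split.
  - apply Rmult_le_reg_r with Bk; [lra|].
    rewrite <- I2.
    assert (/100 * Bk <= (x1+x2)*H2) by nra.
    nra.
  - apply Rmult_le_reg_r with Bk; [lra|].
    rewrite <- I2.
    assert ((x1+x2)*H2 <= 3 * Bk) by nra.
    nra.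
Qed.

Lemma P_Y1 x y1 y2 w1 w2 : 0 < y1 <= /1000000 -> 0 < y2 <= /1000000 -> x <= 2 ->
  2 - x <= 21/2*y1 -> 3/10*y1 <= w1 <= 3/2*y1 -> 3/10*y2 <= w2 <= 3/2*y2 ->
  Rel x y1 w1 -> Rel x y2 w2 -> w2 - w1 <= 8 * Rabs (y2 - y1).
Proof.
  intros [Hy1 Ha1] [Hy2 Ha2] Hx Hx' [Hw1 Hw1'] [Hw2 Hw2'] E1 E2.
  pose proof (Rel_Y _ _ _ _ _ E1 E2) as I.
  destruct (Rle_or_lt (w2 - w1) 0) as [h|h].
  { pose proof (Rabs_pos (y2-y1)). lra. }
  set (C := x^2 - 4 - (x^2 + 4 + 4*x^2*y2^2)*(w1+w2)) in *.
  assert (Hz1: x^2 <= 4) by nra.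
  assert (Hz1': 79/20 <= x^2) by nra.
  assert (HK1: 79/10 <= x^2 + 4 + 4*x^2*y2^2) by nra.
  assert (HC: C <= - (237/100) * (y1+y2)) by (unfold C; nra).
  assert (HR: 4 * x^2 * (1 - w1^2) * (y2^2 - y1^2) <= 16 * (y1+y2) * Rabs (y2-y1)).
  { assert (y2^2 - y1^2 = (y2-y1)*(y2+y1)) by ring.
    assert (0 <= 1 - w1^2 <= 1) by nra.
    assert (- (y2 - y1) <= Rabs (y2-y1)) by (rewrite <- Rabs_Ropp; apply RRle_abs).
    assert (y2 - y1 <= Rabs (y2-y1)) by apply RRle_abs.
    assert (0 <= x^2 * (1-w1^2) <= 4) by nra.
    set (P := x^2 * (1-w1^2)) in *.
    assert (E: 4 * x^2 * (1 - w1^2) * (y2^2 - y1^2) = 4 * P * ((y2-y1)*(y2+y1))) by (unfold P; ring).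
    rewrite E.
    assert ((y2-y1)*(y2+y1) <= Rabs (y2-y1) * (y1+y2)) by nra.
    assert (0 <= Rabs (y2-y1) * (y1+y2)) by (pose proof (Rabs_pos (y2-y1)); nra).
    nra. }
  assert (Hm1: (w2-w1) * (237/100*(y1+y2)) <= (w2-w1) * (-C)) by nra.
  assert (Hm: (w2-w1) * (237/100*(y1+y2)) <= 16 * (y1+y2) * Rabs (y2-y1)) by nra.
  pose proof (Rabs_pos (y2-y1)).
  nra.
Qed.

Lemma M_up x y w : 2 <= x -> 0 < y -> -1 < w < 0 -> Rel x y w -> -w <= 3/2*y.
Proof.
  unfold Rel; intros Hx Hy [Hw1 Hw2] E.
  set (H := (1-w)*(w + 4*y^2*(1+w))) in *.
  assert (HH: H < 0).
  { destruct (Rlt_or_le H 0) as [h|h]; auto.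
    assert (0 <= x^2) by nra. assert (0 <= x^2*H) by nra. nra. }
  assert (4 <= x^2) by nra.
  assert (4*w*(1+w) <= 4*H) by nra.
  unfold H in *.
  assert (2*w^2 <= 4*y^2) by nra.
  nra.
Qed.

Lemma M_lo x y w : 0 < y <= /1000000 -> 2 <= x -> x - 2 <= 21/2*y -> -1 < w < 0 -> -w <= 3/2*y -> Rel x y w -> 3/10*y <= -w.
Proof.
  unfold Rel; intros [Hy Ha] Hx Hx2 [Hw Hw'] Hwu E.
  set (v := -w) in *.
  assert (Ew: w = -v) by (unfold v; ring). rewrite Ew in E.
  clearbody v. subst w.
  set (G := (1+v)*(v - 4*y^2*(1-v))) in *.
  assert (E': x^2 * G = 4*v*(1-v)) by (unfold G; lra).
  assert (HG: 0 < G).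
  { destruct (Rlt_or_le 0 G) as [h|h]; auto.
    assert (0 <= x^2) by nra. assert (x^2*G <= 0) by nra. nra. }
  assert (Hz: x^2 <= 4 + 421/10*y) by nra.
  assert (Q: 4*v*(1-v) <= (4 + 421/10*y) * G) by nra.
  assert (HX: G <= v + v^2 - 4*y^2 + 4*y^2*v^2) by (unfold G; nra).
  assert (Q2: 4*v*(1-v) <= (4 + 421/10*y) * (v + v^2 - 4*y^2 + 4*y^2*v^2)) by nra.
  clear Q HX E E' Hz HG G.
  destruct (Rle_or_lt (3/10*y) v) as [h|h]; auto. exfalso.
  assert (v*v <= 9/100*(y*y)) by nra.
  assert (y*v <= 3/10*(y*y)) by nra.
  assert (y*v*v <= 9/100*(y*y*y)) by nra.
  assert (y*y*v*v <= 9/100*(y*y*y*y)) by nra.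
  assert (y*y*y <= /1000000 * (y*y)) by nra.
  assert (y*y*y*y <= /1000000 * (y*y*y)) by nra.
  assert (0 <= y*y*v*v) by nra.
  nra.
Qed.

Lemma M_end y w : 0 < y <= /1000000 -> -1 < w < 0 -> -w <= 3/2*y -> Rel (2 + 10*y) y w -> -w <= y/2.
Proof.
  unfold Rel; intros [Hy Ha] [Hw Hw'] Hwu E.
  set (v := -w) in *.
  assert (Ew: w = -v) by (unfold v; ring). rewrite Ew in E.
  clearbody v. subst w.
  set (G := (1+v)*(v - 4*y^2*(1-v))) in *.
  assert (E': (2+10*y)^2 * G = 4*v*(1-v)) by (unfold G; lra).
  assert (HG: 0 < G).
  { destruct (Rlt_or_le 0 G) as [h|h]; auto.
    assert (0 <= (2+10*y)^2) by nra. assert ((2+10*y)^2*G <= 0) by nra. nra. }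
  assert (Hz: 4 + 40*y <= (2+10*y)^2) by nra.
  assert (Q: (4 + 40*y) * G <= 4*v*(1-v)) by nra.
  assert (HX: v + v^2 - 4*y^2 <= G) by (unfold G; nra).
  assert (Q2: (4 + 40*y) * (v + v^2 - 4*y^2) <= 4*v*(1-v)) by nra.
  clear Q HX E E' Hz HG G.
  destruct (Rle_or_lt v (y/2)) as [h|h]; auto. exfalso.
  assert (v*v >= 1/4*(y*y)) by nra.
  assert (y*v >= 1/2*(y*y)) by nra.
  assert (y*y*y <= /1000000 * (y*y)) by nra.
  assert (0 <= y*v*v) by nra.
  nra.
Qed.

Lemma M_X x1 x2 y w1 w2 : 0 < y <= /1000000 -> 2 <= x1 -> x1 - 2 <= 21/2*y ->
  2 <= x2 -> x2 - 2 <= 21/2*y -> 3/10*y <= -w1 <= 3/2*y -> 3/10*y <= -w2 <= 3/2*y ->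
  Rel x1 y w1 -> Rel x2 y w2 -> x1 <= x2 ->
  /100*(x2-x1) <= w2 - w1 <= 3*(x2-x1).
Proof.
  intros [Hy Ha] Hx1 Hx1' Hx2 Hx2' [Hw1 Hw1'] [Hw2 Hw2'] E1 E2 Hle.
  pose proof (Rel_X _ _ _ _ _ E1 E2) as I.
  set (H2 := (1-w2)*(w2 + 4*y^2*(1+w2))) in *.
  set (Bk := 4*(1+w1+w2) - x1^2*(1-(1+4*y^2)*(w1+w2))) in *.
  assert (Hz1: 4 <= x1^2) by nra.
  assert (Hz1': x1^2 <= 4 + 421/10*y) by nra.
  assert (HBe: Bk = (4 - x1^2) + (w1+w2)*(4 + x1^2*(1+4*y^2))) by (unfold Bk; ring).
  assert (HK1: 79/10 <= 4 + x1^2*(1+4*y^2)) by nra.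
  assert (HK2: 4 + x1^2*(1+4*y^2) <= 81/10) by nra.
  assert (HBk1: 12/5*y <= - Bk) by (rewrite HBe; nra).
  assert (HBk2: - Bk <= 667/10*y) by (rewrite HBe; nra).
  assert (HH1: 29/100*y <= - H2) by (unfold H2; nra).
  assert (HH2: - H2 <= 8/5*y) by (unfold H2; nra).
  assert (I2: (x2-x1)*((x1+x2)*(-H2)) = (w2-w1)*(-Bk)) by (replace ((w2-w1)*(-Bk)) with (-((w2-w1)*Bk)) by ring; rewrite <- I; ring).
  split.
  - apply Rmult_le_reg_r with (-Bk); [lra|].
    rewrite <- I2.
    assert (/100 * (-Bk) <= (x1+x2)*(-H2)) by nra.
    nra.
  - apply Rmult_le_reg_r with (-Bk); [lra|].
    rewrite <- I2.
    assert ((x1+x2)*(-H2) <= 3 * (-Bk)) by nra.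
    nra.
Qed.

Lemma M_Y1 x y1 y2 w1 w2 : 0 < y1 <= /1000000 -> 0 < y2 <= /1000000 -> 2 <= x ->
  x - 2 <= 21/2*y1 -> 3/10*y1 <= -w1 <= 3/2*y1 -> 3/10*y2 <= -w2 <= 3/2*y2 ->
  Rel x y1 w1 -> Rel x y2 w2 -> w2 - w1 <= 8 * Rabs (y2 - y1).
Proof.
  intros [Hy1 Ha1] [Hy2 Ha2] Hx Hx' [Hw1 Hw1'] [Hw2 Hw2'] E1 E2.
  pose proof (Rel_Y _ _ _ _ _ E1 E2) as I.
  destruct (Rle_or_lt (w2 - w1) 0) as [h|h].
  { pose proof (Rabs_pos (y2-y1)). lra. }
  set (C := x^2 - 4 - (x^2 + 4 + 4*x^2*y2^2)*(w1+w2)) in *.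
  assert (Hz1: 4 <= x^2) by nra.
  assert (Hz1': x^2 <= 4 + 421/10*y1) by nra.
  assert (HK1: 79/10 <= x^2 + 4 + 4*x^2*y2^2) by nra.
  assert (HC: 237/100 * (y1+y2) <= C) by (unfold C; nra).
  assert (HR: - 4 * x^2 * (1 - w1^2) * (y2^2 - y1^2) <= 17 * (y1+y2) * Rabs (y2-y1)).
  { assert (0 <= 1 - w1^2 <= 1) by nra.
    assert (- (y2 - y1) <= Rabs (y2-y1)) by (rewrite <- Rabs_Ropp; apply RRle_abs).
    assert (y2 - y1 <= Rabs (y2-y1)) by apply RRle_abs.
    assert (0 <= x^2 * (1-w1^2) <= 17/4) by nra.
    set (P := x^2 * (1-w1^2)) in *.
    assert (E: - 4 * x^2 * (1 - w1^2) * (y2^2 - y1^2) = 4 * P * (-(y2-y1)*(y2+y1))) by (unfold P; ring).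
    rewrite E.
    assert (-(y2-y1)*(y2+y1) <= Rabs (y2-y1) * (y1+y2)) by nra.
    assert (0 <= Rabs (y2-y1) * (y1+y2)) by (pose proof (Rabs_pos (y2-y1)); nra).
    nra. }
  assert (Hm1: (w2-w1) * (237/100*(y1+y2)) <= (w2-w1) * C) by nra.
  assert (Hm: (w2-w1) * (237/100*(y1+y2)) <= 17 * (y1+y2) * Rabs (y2-y1)) by nra.
  pose proof (Rabs_pos (y2-y1)).
  nra.
Qed.

Lemma P_up x y w : 0 < x <= 2 -> 0 < y -> 0 < w -> Rel x y w -> w <= 3/2*y.
Proof.
  unfold Rel; intros [Hx Hx2] Hy Hw E.
  set (H := (1-w)*(w + 4*y^2*(1+w))) in *.
  assert (HH: 0 < H).
  { destruct (Rlt_or_le 0 H) as [h|h]; auto.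
    assert (0 <= x^2) by nra. assert (x^2*H <= 0) by nra. nra. }
  assert (x^2 <= 4) by nra.
  assert (4*w*(1+w) <= 4*H) by nra.
  unfold H in *.
  assert (2*w^2 <= 4*y^2) by nra.
  nra.
Qed.

Lemma P_lo x y w : 0 < y <= /1000000 -> x <= 2 -> 2 - x <= 21/2*y -> 0 < w -> w <= 3/2*y -> Rel x y w -> 3/10*y <= w.
Proof.
  unfold Rel; intros [Hy Ha] Hx Hx2 Hw Hwu E.
  set (H := (1-w)*(w + 4*y^2*(1+w))) in *.
  assert (HH: 0 < H) by (unfold H; apply Rmult_lt_0_compat; nra).
  assert (Hz: (2 - 21/2*y)^2 <= x^2) by nra.
  assert (Hz2: 4 - 42*y <= x^2) by nra.
  assert (Q: (4 - 42*y) * H <= 4*w*(1+w)) by nra.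
  assert (HX: w + 4*y^2 - w^2 - 4*y^2*w <= H) by (unfold H; nra).
  assert (Q2: (4 - 42*y) * (w + 4*y^2 - w^2 - 4*y^2*w) <= 4*w*(1+w)) by nra.
  clear Q HX E Hz Hz2 HH H.
  destruct (Rle_or_lt (3/10*y) w) as [h|h]; auto. exfalso.
  assert (w*w <= 9/100*(y*y)) by nra.
  assert (y*w <= 3/10*(y*y)) by nra.
  assert (y*y*w <= 3/10*(y*y*y)) by nra.
  assert (y*y*y <= /1000000 * (y*y)) by nra.
  assert (0 <= y*w*w) by nra.
  assert (0 <= y*y*y*w) by nra.
  nra.
Qed.



Lemma deriv_ge (phi : R -> R) p q c x l :
  (forall t1 t2, p <= t1 -> t1 <= t2 -> t2 <= q -> c*(t2-t1) <= phi t2 - phi t1) ->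
  p < x < q -> derivable_pt_lim phi x l -> c <= l.
Proof.
  intros Hexp [Hp Hq] Hd.
  destruct (Rle_or_lt c l) as [h|h]; auto. exfalso.
  destruct (Hd (c - l)) as [del Hdel]; [lra|].
  set (h0 := Rmin (del/2) ((q-x)/2)).
  assert (Hdp := cond_pos del).
  assert (Hh1: 0 < h0) by (unfold h0; apply Rmin_pos; lra).
  assert (Hh2: h0 <= del/2) by (unfold h0; apply Rmin_l).
  assert (Hh3: h0 <= (q-x)/2) by (unfold h0; apply Rmin_r).
  specialize (Hdel h0).
  assert (A: Rabs ((phi (x + h0) - phi x) / h0 - l) < c - l).
  { apply Hdel; [lra|]. rewrite Rabs_pos_eq; lra. }
  assert (B: c * h0 <= phi (x+h0) - phi x).
  { replace (c*h0) with (c*((x+h0)-x)) by ring. apply Hexp; lra. }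
  assert (C: c <= (phi (x + h0) - phi x) / h0).
  { apply Rmult_le_reg_r with h0; auto. unfold Rdiv. rewrite Rmult_assoc, Rinv_l; lra. }
  pose proof (RRle_abs ((phi (x + h0) - phi x) / h0 - l)). lra.
Qed.

Definition clamp p q t := Rmax p (Rmin q t).

Lemma clamp_in p q t : p <= q -> p <= clamp p q t <= q.
Proof. intros. unfold clamp, Rmax, Rmin. repeat destruct Rle_dec; lra. Qed.

Lemma clamp_id p q t : p <= t <= q -> clamp p q t = t.
Proof. intros. unfold clamp, Rmax, Rmin. repeat destruct Rle_dec; lra. Qed.

Lemma clamp_lip p q t1 t2 : p <= q -> Rabs (clamp p q t1 - clamp p q t2) <= Rabs (t1 - t2).
Proof.
  intros. unfold clamp, Rmax, Rmin. repeat destruct Rle_dec;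
  unfold Rabs; repeat destruct Rcase_abs; lra.
Qed.

Lemma ivt_lip (h : R -> R) p q M : p <= q -> 0 <= M ->
  (forall t1 t2, p <= t1 <= q -> p <= t2 <= q -> Rabs (h t2 - h t1) <= M * Rabs (t2 - t1)) ->
  h p <= 0 -> 0 <= h q -> exists t, p <= t <= q /\ h t = 0.
Proof.
  intros Hpq HM Hl Hp Hq.
  set (he := fun t => h (clamp p q t)).
  assert (Hc: continuity he).
  { intros x0. unfold continuity_pt, continue_in, limit1_in, limit_in. simpl. unfold R_dist.
    intros eps Heps. exists (eps/(M+1)). split.
    - apply Rdiv_lt_0_compat; lra.
    - intros x1 [_ Hx1]. unfold he.
      pose proof (clamp_in p q x1 Hpq). pose proof (clamp_in p q x0 Hpq).
      pose proof (Hl _ _ H0 H).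
      pose proof (clamp_lip p q x1 x0 Hpq).
      assert (M * Rabs (x1 - x0) <= M * (eps/(M+1))) by (apply Rmult_le_compat_l; lra).
      assert (M * (eps/(M+1)) < eps).
      { assert (eps/(M+1)*(M+1) = eps) by (field; lra).
        assert (0 < eps/(M+1)) by (apply Rdiv_lt_0_compat; lra). nra. }
      assert (M * Rabs (clamp p q x1 - clamp p q x0) <= M * Rabs (x1 - x0)) by (apply Rmult_le_compat_l; lra).
      lra. }
  assert (Hp' : he p = h p) by (unfold he; rewrite clamp_id; auto; lra).
  assert (Hq' : he q = h q) by (unfold he; rewrite clamp_id; auto; lra).
  destruct (IVT_cor he p q Hc Hpq) as [z [Hz1 Hz2]].
  { rewrite Hp', Hq'. nra. }
  exists z. split; auto. unfold he in Hz2. rewrite clamp_id in Hz2; auto.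
Qed.

Lemma lip_sym (F : R -> R) p q K :
  (forall t1 t2, p <= t1 -> t1 <= t2 -> t2 <= q -> Rabs (F t2 - F t1) <= K * (t2 - t1)) ->
  forall t1 t2, p <= t1 <= q -> p <= t2 <= q -> Rabs (F t2 - F t1) <= K * Rabs (t2 - t1).
Proof.
  intros H t1 t2 H1 H2. destruct (Rle_or_lt t1 t2).
  - rewrite (Rabs_pos_eq (t2 - t1)) by lra. apply H; lra.
  - rewrite Rabs_minus_sym, (Rabs_minus_sym t2). rewrite (Rabs_pos_eq (t1 - t2)) by lra. apply H; lra.
Qed.

Lemma topo (a L c K M : R) (f phi psi : R -> R) (p q : R) :
  p < q -> 1 < c -> 0 <= K -> K <= L -> K < /10 -> 0 <= M ->
  (forall t1 t2, p <= t1 -> t1 <= t2 -> t2 <= q -> c*(t2-t1) <= phi t2 - phi t1) ->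
  (forall t1 t2, p <= t1 -> t1 <= t2 -> t2 <= q -> Rabs (phi t2 - phi t1) <= M * (t2 - t1)) ->
  (forall t1 t2, p <= t1 -> t1 <= t2 -> t2 <= q -> Rabs (psi t2 - psi t1) <= K * (t2 - t1)) ->
  (forall t, p <= t <= q -> 0 < psi t <= a) ->
  (forall t t', p <= t <= q -> p <= t' <= q -> psi t < / 4 * f t') ->
  psi p <= (2 - phi p)/10 -> phi p <= 2 -> 2 <= phi q -> psi q <= (phi q - 2)/10 ->
  exists (g : R -> R) (p1 q1 : R),
    flat_arc_in L (upperV a) g p1 q1 /\
    (forall x, p1 <= x <= q1 -> exists t, p <= t <= q /\ (phi t, psi t) = (x, g x)) /\
    NWface a p1 (g p1) /\ NEface a q1 (g q1) /\
    (forall x t, p1 <= x <= q1 -> p <= t <= q -> g x < / 4 * f t).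
Proof.
  intros Hpq Hc HK0 HKL HK1 HM0 Hexp Hphil Hpsil Hpsib Hpsih Hp1 Hp2 Hq1 Hq2.
  assert (Hphil' := lip_sym phi p q M Hphil).
  assert (Hpsil' := lip_sym psi p q K Hpsil).
  assert (Hpsi_lo: forall t1 t2, p <= t1 -> t1 <= t2 -> t2 <= q -> -K*(t2-t1) <= psi t2 - psi t1).
  { intros t1 t2 ? ? ?. pose proof (Hpsil t1 t2 H H0 H1).
    rewrite <- Rabs_Ropp in H2. pose proof (RRle_abs (- (psi t2 - psi t1))). lra. }
  assert (Hpsi_hi: forall t1 t2, p <= t1 -> t1 <= t2 -> t2 <= q -> psi t2 - psi t1 <= K*(t2-t1)).
  { intros t1 t2 ? ? ?. pose proof (Hpsil t1 t2 H H0 H1).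
    pose proof (RRle_abs (psi t2 - psi t1)). lra. }
  destruct (ivt_lip (fun t => psi t - (2 - phi t)/10) p q (K + M/10)) as [ta [Hta Hta0]].
  { lra. } { lra. }
  { intros t1 t2 H1 H2.
    replace (psi t2 - (2 - phi t2) / 10 - (psi t1 - (2 - phi t1) / 10)) with
      ((psi t2 - psi t1) + (phi t2 - phi t1)/10) by field.
    eapply Rle_trans; [apply Rabs_triang|].
    unfold Rdiv; rewrite Rabs_mult, (Rabs_pos_eq (/10)) by lra.
    pose proof (Hphil' t1 t2 H1 H2). pose proof (Hpsil' t1 t2 H1 H2). lra. }
  { simpl. lra. }
  { simpl. pose proof (Hpsib q). lra. }
  simpl in Hta0.
  destruct (ivt_lip (fun t => (phi t - 2)/10 - psi t) p q (K + M/10)) as [tb [Htb Htb0]].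
  { lra. } { lra. }
  { intros t1 t2 H1 H2.
    replace ((phi t2 - 2) / 10 - psi t2 - ((phi t1 - 2) / 10 - psi t1)) with
      ((phi t2 - phi t1)/10 - (psi t2 - psi t1)) by field.
    eapply Rle_trans; [apply Rabs_triang|]. rewrite Rabs_Ropp.
    unfold Rdiv; rewrite Rabs_mult, (Rabs_pos_eq (/10)) by lra.
    pose proof (Hphil' t1 t2 H1 H2). pose proof (Hpsil' t1 t2 H1 H2). lra. }
  { simpl. pose proof (Hpsib p). lra. }
  { simpl. lra. }
  simpl in Htb0.
  assert (Hinj: forall t t', p <= t <= q -> p <= t' <= q -> phi t = phi t' -> t = t').
  { intros t t' H1 H2 He. destruct (Rtotal_order t t') as [h|[h|h]]; auto.
    - pose proof (Hexp t t' ltac:(lra) ltac:(lra) ltac:(lra)). nra.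
    - pose proof (Hexp t' t ltac:(lra) ltac:(lra) ltac:(lra)). nra. }
  assert (Hab: ta < tb).
  { destruct (Rlt_or_le ta tb) as [h|h]; auto. exfalso.
    pose proof (Hpsib ta Hta). pose proof (Hpsib tb Htb).
    pose proof (Hexp tb ta ltac:(lra) h ltac:(lra)). nra. }
  assert (Hwedge: forall t, ta <= t <= tb -> (2 - phi t)/10 <= psi t /\ (phi t - 2)/10 <= psi t).
  { intros t Ht. split.
    - pose proof (Hexp ta t ltac:(lra) ltac:(lra) ltac:(lra)).
      pose proof (Hpsi_lo ta t ltac:(lra) ltac:(lra) ltac:(lra)). nra.
    - pose proof (Hexp t tb ltac:(lra) ltac:(lra) ltac:(lra)).
      pose proof (Hpsi_hi t tb ltac:(lra) ltac:(lra) ltac:(lra)). nra. }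
  assert (Hcontr: forall t t', p <= t <= q -> p <= t' <= q -> Rabs (t - t') <= Rabs (phi t - phi t')).
  { intros t t' H1 H2. destruct (Rle_or_lt t' t) as [h|h].
    - pose proof (Hexp t' t ltac:(lra) h ltac:(lra)).
      rewrite (Rabs_pos_eq (t - t')) by lra. rewrite Rabs_pos_eq; nra.
    - pose proof (Hexp t t' ltac:(lra) ltac:(lra) ltac:(lra)).
      rewrite (Rabs_minus_sym t), (Rabs_minus_sym (phi t)).
      rewrite (Rabs_pos_eq (t' - t)) by lra. rewrite Rabs_pos_eq; nra. }
  set (P x := fun t => ta <= t <= tb /\ phi t = x).
  set (inv x := epsilon (inhabits 0) (P x)).
  assert (Hinv: forall x, phi ta <= x <= phi tb -> ta <= inv x <= tb /\ phi (inv x) = x).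
  { intros x Hx. apply (epsilon_spec (inhabits 0) (P x)).
    destruct (ivt_lip (fun t => phi t - x) ta tb M) as [t [Ht Ht0]].
    { lra. } { lra. }
    { intros t1 t2 H1 H2. replace (phi t2 - x - (phi t1 - x)) with (phi t2 - phi t1) by ring.
      apply Hphil'; lra. }
    { lra. } { lra. }
    exists t. split; auto. lra. }
  set (g x := psi (inv x)).
  assert (Hord: phi ta <= phi tb) by (pose proof (Hexp ta tb ltac:(lra) ltac:(lra) ltac:(lra)); nra).
  assert (Hga: g (phi ta) = psi ta).
  { unfold g. destruct (Hinv (phi ta)) as [H1 H2].
    { lra. }
    rewrite (Hinj (inv (phi ta)) ta ltac:(lra) Hta H2). auto. }
  assert (Hgb: g (phi tb) = psi tb).
  { unfold g. destruct (Hinv (phi tb)) as [H1 H2].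
    { lra. }
    rewrite (Hinj (inv (phi tb)) tb ltac:(lra) Htb H2). auto. }
  exists g, (phi ta), (phi tb).
  split; [|split; [|split; [|split]]].
  - split; [auto|split].
    + intros x y Hx Hy. destruct (Hinv x Hx) as [Hx1 Hx2]. destruct (Hinv y Hy) as [Hy1 Hy2].
      unfold g. 
      assert (Hd: Rabs (inv x - inv y) <= Rabs (x - y)).
      { rewrite <- Hx2 at 2. rewrite <- Hy2 at 2. apply Hcontr; lra. }
      pose proof (Hpsil' (inv y) (inv x) ltac:(lra) ltac:(lra)).
      pose proof (Rabs_pos (inv x - inv y)). pose proof (Rabs_pos (x-y)).
      assert (K * Rabs (inv x - inv y) <= L * Rabs (x - y)) by nra.
      lra.
    + intros x Hx. destruct (Hinv x Hx) as [Hx1 Hx2]. unfold g.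
      pose proof (Hwedge _ Hx1). pose proof (Hpsib (inv x) ltac:(lra)).
      unfold upperV, Vwedge. rewrite (Rabs_pos_eq (psi (inv x))) by lra.
      split; [split|]; try lra.
      replace (x - 2) with (phi (inv x) - 2) by (rewrite Hx2; ring). unfold Rabs; destruct Rcase_abs; lra.
  - intros x Hx. destruct (Hinv x Hx) as [Hx1 Hx2]. exists (inv x). split; [lra|].
    rewrite Hx2. reflexivity.
  - unfold NWface. rewrite Hga. pose proof (Hpsib ta Hta). lra.
  - unfold NEface. rewrite Hgb. pose proof (Hpsib tb Htb). lra.
  - intros x t Hx Ht. destruct (Hinv x Hx) as [Hx1 Hx2]. unfold g. apply Hpsih; auto; lra.
Qed.



Lemma Rabs_le_inv x r : Rabs x <= r -> -r <= x <= r.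
Proof. unfold Rabs; destruct Rcase_abs; lra. Qed.

Lemma phi_exp w1 w2 t1 t2 : Rabs w1 <= 2/1000000 -> Rabs w2 <= 2/1000000 ->
  19/10 <= t1 -> t1 <= t2 -> t2 <= 21/10 ->
  /200*(t2-t1) <= w2 - w1 <= 4*(t2-t1) ->
  101/100*(t2-t1) <= (1+w2)/(1-w2)*t2 - (1+w1)/(1-w1)*t1 <= 20*(t2-t1).
Proof.
  intros Hw1 Hw2 Ht1 Ht12 Ht2 [Hd1 Hd2].
  apply Rabs_le_inv in Hw1. apply Rabs_le_inv in Hw2.
  set (u1 := (1+w1)/(1-w1)). set (u2 := (1+w2)/(1-w2)).
  assert (E1: u1*(1-w1) = 1+w1) by (unfold u1; field; lra).
  assert (E2: u2*(1-w2) = 1+w2) by (unfold u2; field; lra).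
  assert (U1: 99/100 <= u1 <= 101/100) by nra.
  assert (U2: 99/100 <= u2 <= 101/100) by nra.
  assert (Ed: (u2-u1)*((1-w1)*(1-w2)) = 2*(w2-w1)) by nra.
  assert (P: 999/1000 <= (1-w1)*(1-w2) <= 1001/1000) by nra.
  assert (D1: 0 <= u2 - u1) by nra.
  assert (D2: 2*(w2-w1)/(1001/1000) <= u2 - u1) by (apply Rmult_le_reg_r with (1001/1000); [lra|]; unfold Rdiv; rewrite Rmult_assoc, Rinv_l; nra).
  assert (D3: u2 - u1 <= 2*(w2-w1)/(999/1000)) by (apply Rmult_le_reg_r with (999/1000); [lra|]; unfold Rdiv; rewrite Rmult_assoc, Rinv_l; nra).
  assert (Eq: u2*t2 - u1*t1 = (t2-t1)*u2 + t1*(u2-u1)) by ring.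
  split; nra.
Qed.

Lemma habs_lip w1 w2 : Rabs w1 <= /100 -> Rabs w2 <= /100 ->
  Rabs (Rabs w2/(1+w2) - Rabs w1/(1+w1)) <= 11/10 * Rabs (w2 - w1).
Proof.
  intros Hw1 Hw2.
  pose proof (Rabs_le_inv _ _ Hw1). pose proof (Rabs_le_inv _ _ Hw2).
  set (h1 := Rabs w1/(1+w1)). set (h2 := Rabs w2/(1+w2)).
  assert (E1: h1*(1+w1) = Rabs w1) by (unfold h1; field; lra).
  assert (E2: h2*(1+w2) = Rabs w2) by (unfold h2; field; lra).
  assert (EN: (h2-h1)*((1+w1)*(1+w2)) = Rabs w2*(1+w1) - Rabs w1*(1+w2)) by nra.
  assert (HN: Rabs (Rabs w2*(1+w1) - Rabs w1*(1+w2)) <= 102/100 * Rabs (w2-w1)).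
  { destruct (Rle_or_lt 0 w1); destruct (Rle_or_lt 0 w2).
    - rewrite (Rabs_pos_eq w1), (Rabs_pos_eq w2) by lra.
      replace (w2 * (1 + w1) - w1 * (1 + w2)) with (w2 - w1) by ring.
      pose proof (Rabs_pos (w2-w1)). lra.
    - rewrite (Rabs_pos_eq w1), (Rabs_left w2) by lra.
      rewrite (Rabs_left (w2 - w1)) by lra.
      unfold Rabs; destruct Rcase_abs; nra.
    - rewrite (Rabs_left w1), (Rabs_pos_eq w2) by lra.
      rewrite (Rabs_pos_eq (w2 - w1)) by lra.
      unfold Rabs; destruct Rcase_abs; nra.
    - rewrite (Rabs_left w1), (Rabs_left w2) by lra.
      replace (- w2 * (1 + w1) - - w1 * (1 + w2)) with (- (w2 - w1)) by ring.
      rewrite Rabs_Ropp. pose proof (Rabs_pos (w2-w1)). lra. }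
  rewrite <- EN in HN. rewrite Rabs_mult in HN.
  rewrite (Rabs_pos_eq ((1+w1)*(1+w2))) in HN by nra.
  pose proof (Rabs_pos (h2-h1)). pose proof (Rabs_pos (w2-w1)).
  assert (98/100 <= (1+w1)*(1+w2)) by nra.
  nra.
Qed.

Lemma psi_lip w1 w2 y1 y2 t1 t2 : Rabs w1 <= 2/1000000 -> Rabs w2 <= 2/1000000 ->
  0 < y1 <= /1000000 -> 0 < y2 <= /1000000 -> t1 <= t2 ->
  Rabs (w2 - w1) <= 4*(t2-t1) -> Rabs (y2 - y1) <= /10000*(t2-t1) ->
  Rabs (Rabs w2/(1+w2)*y2 - Rabs w1/(1+w1)*y1) <= /100000*(t2-t1).
Proof.
  intros Hw1 Hw2 Hy1 Hy2 Ht Hdw Hdy.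
  pose proof (habs_lip w1 w2 ltac:(lra) ltac:(lra)) as Hh.
  pose proof (Rabs_le_inv _ _ Hw1). pose proof (Rabs_le_inv _ _ Hw2).
  set (h1 := Rabs w1/(1+w1)) in *. set (h2 := Rabs w2/(1+w2)) in *.
  assert (E1: h1*(1+w1) = Rabs w1) by (unfold h1; field; lra).
  assert (B1: 0 <= h1 <= 3/1000000).
  { pose proof (Rabs_pos w1). split; nra. }
  clearbody h1 h2.
  replace (h2*y2 - h1*y1) with ((h2-h1)*y2 + h1*(y2-y1)) by ring.
  eapply Rle_trans; [apply Rabs_triang|].
  rewrite !Rabs_mult. rewrite (Rabs_pos_eq y2) by lra. rewrite (Rabs_pos_eq h1) by lra.
  pose proof (Rabs_pos (h2 - h1)). pose proof (Rabs_pos (y2-y1)).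
  assert (Rabs (h2 - h1) <= 44/10*(t2-t1)) by lra.
  nra.
Qed.



Lemma endP_left y w : 0 < y <= /1000000 -> 0 < w <= y/2 ->
  (1+w)/(1-w)*(2-10*y) <= 2 /\ Rabs w/(1+w)*y <= (2 - (1+w)/(1-w)*(2-10*y))/10.
Proof.
  intros Hy Hw. rewrite Rabs_pos_eq by lra.
  set (u := (1+w)/(1-w)). set (h := w/(1+w)).
  assert (E1: u*(1-w) = 1+w) by (unfold u; field; lra).
  assert (E2: h*(1+w) = w) by (unfold h; field; lra).
  clearbody u h.
  assert (U: u*(2-10*y) <= 2 - 79/10*y) by nra.
  assert (H: h <= y) by nra.
  split; nra.
Qed.

Lemma endP_right y w : 0 < y <= /1000000 -> 0 < w <= 3/2*y ->
  2 <= (1+w)/(1-w)*2 /\ Rabs w/(1+w)*y <= ((1+w)/(1-w)*2 - 2)/10.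
Proof.
  intros Hy Hw. rewrite Rabs_pos_eq by lra.
  set (u := (1+w)/(1-w)). set (h := w/(1+w)).
  assert (E1: u*(1-w) = 1+w) by (unfold u; field; lra).
  assert (E2: h*(1+w) = w) by (unfold h; field; lra).
  clearbody u h.
  assert (U: 1 + 2*w <= u) by nra.
  assert (H: h <= w) by nra.
  split; nra.
Qed.

Lemma endM_left y w : 0 < y <= /1000000 -> -(3/2*y) <= w < 0 ->
  (1+w)/(1-w)*2 <= 2 /\ Rabs w/(1+w)*y <= (2 - (1+w)/(1-w)*2)/10.
Proof.
  intros Hy Hw. rewrite Rabs_left by lra.
  set (u := (1+w)/(1-w)). set (h := -w/(1+w)).
  assert (E1: u*(1-w) = 1+w) by (unfold u; field; lra).
  assert (E2: h*(1+w) = -w) by (unfold h; field; lra).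
  clearbody u h.
  assert (U2: u <= 1 + w) by nra.
  assert (H: h <= -2*w) by nra.
  split; nra.
Qed.

Lemma endM_right y w : 0 < y <= /1000000 -> -(y/2) <= w < 0 ->
  2 <= (1+w)/(1-w)*(2+10*y) /\ Rabs w/(1+w)*y <= ((1+w)/(1-w)*(2+10*y) - 2)/10.
Proof.
  intros Hy Hw. rewrite Rabs_left by lra.
  set (u := (1+w)/(1-w)). set (h := -w/(1+w)).
  assert (E1: u*(1-w) = 1+w) by (unfold u; field; lra).
  assert (E2: h*(1+w) = -w) by (unfold h; field; lra).
  clearbody u h.
  assert (U: 2 + 79/10*y <= u*(2+10*y)) by nra.
  assert (H: h <= y) by nra.
  split; nra.
Qed.


Lemma cross f p q e : flat_arc_in (/10000) (upperV (/1000000)) f p q -> p <= e <= q -> q - p <= 10 * f e ->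
  forall t t', p <= t <= q -> p <= t' <= q ->
  Rabs (t-2) <= 21/2 * f t' /\ f t <= 101/100 * f t' /\ 0 < f t' <= /1000000.
Proof.
  intros [Hpq [Hlip Hin]] He Hqe t t' Ht Ht'.
  destruct (Hin t Ht) as [[Ha1 Ha2] Hpos]. destruct (Hin t' Ht') as [[Hb1 Hb2] Hpos'].
  destruct (Hin e He) as [[Hc1 Hc2] Hpose].
  rewrite (Rabs_pos_eq (f t)) in Ha1, Ha2 by lra. rewrite (Rabs_pos_eq (f t')) in Hb1, Hb2 by lra.
  pose proof (Hlip e t' He Ht') as L1. pose proof (Hlip t t' Ht Ht') as L2.
  assert (D1: Rabs (e - t') <= q - p) by (unfold Rabs; destruct Rcase_abs; lra).
  assert (D2: Rabs (t - t') <= q - p) by (unfold Rabs; destruct Rcase_abs; lra).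
  apply Rabs_le_inv in L1. apply Rabs_le_inv in L2.
  assert (Hqp: q - p <= 1002/100 * f t') by lra.
  split; [|split]; lra.
Qed.

Lemma arc_omega (Om : R -> R -> R) (Reg : R -> R -> Prop) (f : R -> R) p q L k M1 M2 :
  0 <= M2 -> 0 <= L ->
  (forall x1 x2 y, Reg x1 y -> Reg x2 y -> x1 <= x2 -> k*(x2-x1) <= Om x2 y - Om x1 y <= M1*(x2-x1)) ->
  (forall x y1 y2, Reg x y1 -> Reg x y2 -> Rabs (Om x y2 - Om x y1) <= M2 * Rabs (y2-y1)) ->
  (forall t t', p <= t <= q -> p <= t' <= q -> Reg t (f t')) ->
  (forall t t', p <= t <= q -> p <= t' <= q -> Rabs (f t - f t') <= L * Rabs (t - t')) ->
  forall t1 t2, p <= t1 -> t1 <= t2 -> t2 <= q ->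
    (k - M2*L)*(t2-t1) <= Om t2 (f t2) - Om t1 (f t1) <= (M1 + M2*L)*(t2-t1).
Proof.
  intros HM2 HL HX HY HR Hf t1 t2 H1 H12 H2.
  destruct (HX t1 t2 (f t2) (HR t1 t2 ltac:(lra) ltac:(lra)) (HR t2 t2 ltac:(lra) ltac:(lra)) H12) as [A1 A2].
  pose proof (HY t1 (f t1) (f t2) (HR t1 t1 ltac:(lra) ltac:(lra)) (HR t1 t2 ltac:(lra) ltac:(lra))) as B.
  pose proof (Hf t2 t1 ltac:(lra) ltac:(lra)) as C.
  rewrite (Rabs_pos_eq (t2 - t1)) in C by lra.
  assert (C': M2 * Rabs (f t2 - f t1) <= M2 * (L * (t2 - t1))) by (apply Rmult_le_compat_l; lra).
  apply Rabs_le_inv in B.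
  split; nra.
Qed.

Lemma assemble (W : R -> R -> R*R) (Om : R -> R -> R) (Reg : R -> R -> Prop) (LF0 RF0 : R -> R -> Prop) :
  (forall x y, W x y = ((1 + Om x y)/(1 - Om x y) * x, Rabs (Om x y)/(1 + Om x y) * y)) ->
  (forall x y, Reg x y -> 0 < y <= /1000000 /\ Rabs (Om x y) <= 3/2*y /\ Om x y <> 0) ->
  (forall x1 x2 y, Reg x1 y -> Reg x2 y -> x1 <= x2 -> /100*(x2-x1) <= Om x2 y - Om x1 y <= 3*(x2-x1)) ->
  (forall x y1 y2, Reg x y1 -> Reg x y2 -> Rabs (Om x y2 - Om x y1) <= 8 * Rabs (y2-y1)) ->
  (forall f p q, flat_arc_in (/10000) (upperV (/1000000)) f p q -> LF0 p (f p) -> RF0 q (f q) ->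
    p < q /\ (forall t t', p <= t <= q -> p <= t' <= q -> Reg t (f t') /\ f t <= 101/100 * f t' /\ 19/10 <= t <= 21/10) /\
    Rabs (Om p (f p))/(1+Om p (f p)) * f p <= (2 - (1+Om p (f p))/(1-Om p (f p))*p)/10 /\
    (1+Om p (f p))/(1-Om p (f p))*p <= 2 /\
    2 <= (1+Om q (f q))/(1-Om q (f q))*q /\
    Rabs (Om q (f q))/(1+Om q (f q)) * f q <= ((1+Om q (f q))/(1-Om q (f q))*q - 2)/10) ->
  transfer_property (/10000) W (upperV (/1000000)) LF0 RF0 (NWface (/1000000)) (NEface (/1000000)) (fun y => y).
Proof.
  intros HW HR HX HY Hc f p q Hfl Hl Hr.
  destruct (Hc f p q Hfl Hl Hr) as (Hpq & Hgeo & E1 & E2 & E3 & E4).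
  set (om := fun t => Om t (f t)).
  set (phi := fun t => fst (W t (f t))). set (psi := fun t => snd (W t (f t))).
  assert (Hphi: forall t, phi t = (1+om t)/(1-om t)*t) by (intro t; unfold phi; rewrite HW; reflexivity).
  assert (Hpsi: forall t, psi t = Rabs (om t)/(1+om t)*f t) by (intro t; unfold psi; rewrite HW; reflexivity).
  assert (HWe: forall t, W t (f t) = (phi t, psi t)) by (intro t; unfold phi, psi; destruct (W t (f t)); reflexivity).
  destruct Hfl as [Hpq' [Hlip Hin]].
  assert (Harc := arc_omega Om Reg f p q (/10000) (/100) 3 8 ltac:(lra) ltac:(lra) HX HY
             (fun t t' H1 H2 => proj1 (Hgeo t t' H1 H2)) Hlip).
  assert (Harc': forall t1 t2, p <= t1 -> t1 <= t2 -> t2 <= q -> /200*(t2-t1) <= om t2 - om t1 <= 4*(t2-t1)).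
  { intros t1 t2 H1 H2 H3. destruct (Harc t1 t2 H1 H2 H3). unfold om. split; nra. }
  assert (Hpt: forall t, p <= t <= q -> Rabs (om t) <= 2/1000000 /\ 19/10 <= t <= 21/10 /\ 0 < f t <= /1000000 /\ om t <> 0).
  { intros t Ht. destruct (Hgeo t t Ht Ht) as [HRg [_ Ht2]]. destruct (HR _ _ HRg) as (A & B & C).
    unfold om. repeat split; try lra. }
  assert (Hflip: forall t1 t2, p <= t1 -> t1 <= t2 -> t2 <= q -> Rabs (f t2 - f t1) <= /10000*(t2-t1)).
  { intros t1 t2 H1 H2 H3. rewrite <- (Rabs_pos_eq (t2 - t1)) by lra. apply Hlip; lra. }
  destruct (topo (/1000000) (/10000) (101/100) (/100000) 20 f phi psi p q) as (g & p1 & q1 & G1 & G2 & G3 & G4 & G5).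
  - lra. - lra. - lra. - lra. - lra. - lra.
  - intros t1 t2 H1 H2 H3. rewrite !Hphi.
    destruct (Hpt t1 ltac:(lra)) as (A1 & B1 & _). destruct (Hpt t2 ltac:(lra)) as (A2 & B2 & _).
    apply (phi_exp (om t1) (om t2) t1 t2); auto; try lra.
  - intros t1 t2 H1 H2 H3. rewrite !Hphi.
    destruct (Hpt t1 ltac:(lra)) as (A1 & B1 & _). destruct (Hpt t2 ltac:(lra)) as (A2 & B2 & _).
    destruct (phi_exp (om t1) (om t2) t1 t2) as [P1 P2]; auto; try lra.
    rewrite Rabs_pos_eq; lra.
  - intros t1 t2 H1 H2 H3. rewrite !Hpsi.
    destruct (Hpt t1 ltac:(lra)) as (A1 & B1 & C1 & _). destruct (Hpt t2 ltac:(lra)) as (A2 & B2 & C2 & _).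
    apply psi_lip; auto; try (apply Hflip; auto);
    destruct (Harc' t1 t2 H1 H2 H3); rewrite Rabs_pos_eq; lra.
  - intros t Ht. rewrite Hpsi. destruct (Hpt t Ht) as (A & B & C & D).
    apply Rabs_le_inv in A as A'.
    assert (0 < Rabs (om t)) by (apply Rabs_pos_lt; auto).
    set (h := Rabs (om t) / (1 + om t)).
    assert (Eh: h * (1 + om t) = Rabs (om t)) by (unfold h; field; lra).
    assert (0 < h <= 3/1000000) by (clearbody h; split; nra).
    split; nra.
  - intros t t' Ht Ht'. rewrite Hpsi. destruct (Hpt t Ht) as (A & B & C & D).
    destruct (Hgeo t t' Ht Ht') as (_ & F & _).
    apply Rabs_le_inv in A as A'.
    pose proof (Rabs_pos (om t)).
    set (h := Rabs (om t) / (1 + om t)).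
    assert (Eh: h * (1 + om t) = Rabs (om t)) by (unfold h; field; lra).
    assert (0 <= h <= 3/1000000) by (clearbody h; split; nra).
    nra.
  - rewrite Hpsi, Hphi. exact E1.
  - rewrite Hphi. exact E2.
  - rewrite Hphi. exact E3.
  - rewrite Hpsi, Hphi. exact E4.
  - exists g, p1, q1. split; [exact G1|]. split; [|split; [exact G3|split; [exact G4|split; [exact G5|]]]].
    + intros x Hx. destruct (G2 x Hx) as [t [Ht Ht']]. exists t. split; auto. rewrite HWe. exact Ht'.
    + intros x1 x2 Hx1 Hx2 _ _ x l Hx Hd.
      assert (Hxx: p < x < q).
      { unfold Rmin, Rmax in Hx. destruct Rle_dec; lra. }
      assert (Hexp: forall t1 t2, p <= t1 -> t1 <= t2 -> t2 <= q -> 101/100*(t2-t1) <= phi t2 - phi t1).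
      { intros t1 t2 H1 H2 H3. rewrite !Hphi.
        destruct (Hpt t1 ltac:(lra)) as (A1 & B1 & _). destruct (Hpt t2 ltac:(lra)) as (A2 & B2 & _).
        apply (phi_exp (om t1) (om t2) t1 t2); auto; try lra. }
      pose proof (deriv_ge phi p q (101/100) x l Hexp Hxx Hd). lra.
Qed.


Definition RegP x y := 0 < y <= /1000000 /\ x <= 2 /\ 2 - x <= 21/2*y.
Definition RegM x y := 0 < y <= /1000000 /\ 2 <= x /\ x - 2 <= 21/2*y.

Lemma RegP_om x y : RegP x y -> 3/10*y <= omega_p x y <= 3/2*y /\ Rel x y (omega_p x y).
Proof.
  intros (Hy & Hx & Hx2).
  destruct (omega_p_facts x y ltac:(lra) ltac:(lra)) as [Hw E].
  pose proof (P_up x y _ ltac:(lra) ltac:(lra) Hw E).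
  pose proof (P_lo x y _ Hy Hx Hx2 Hw H E). auto.
Qed.

Lemma RegM_om x y : RegM x y -> 3/10*y <= - omega_m x y <= 3/2*y /\ -1 < omega_m x y < 0 /\ Rel x y (omega_m x y).
Proof.
  intros (Hy & Hx & Hx2).
  destruct (omega_m_facts x y ltac:(lra) ltac:(lra)) as [Hw E].
  pose proof (M_up x y _ Hx ltac:(lra) Hw E).
  pose proof (M_lo x y _ Hy Hx Hx2 Hw H E). auto.
Qed.

Lemma caseP : transfer_property (/10000) Wp (upperV (/1000000)) (NWface (/1000000)) line2
   (NWface (/1000000)) (NEface (/1000000)) (fun y => y).
Proof.
  apply (assemble Wp omega_p RegP).
  - intros x y. reflexivity.
  - intros x y HR. destruct (RegP_om x y HR) as [A _]. destruct HR as (Hy & _).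
    rewrite Rabs_pos_eq by lra. repeat split; lra.
  - intros x1 x2 y H1 H2 H12. destruct (RegP_om _ _ H1) as [A1 E1]. destruct (RegP_om _ _ H2) as [A2 E2].
    destruct H1 as (Hy & Hx1 & Hx1'). destruct H2 as (_ & Hx2 & Hx2').
    apply (P_X x1 x2 y); auto.
  - intros x y1 y2 H1 H2. destruct (RegP_om _ _ H1) as [A1 E1]. destruct (RegP_om _ _ H2) as [A2 E2].
    destruct H1 as (Hy1 & Hx1 & Hx1'). destruct H2 as (Hy2 & _ & Hx2').
    pose proof (P_Y1 x y1 y2 _ _ Hy1 Hy2 Hx1 Hx1' A1 A2 E1 E2).
    pose proof (P_Y1 x y2 y1 _ _ Hy2 Hy1 Hx1 Hx2' A2 A1 E2 E1).
    rewrite Rabs_minus_sym in H0.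
    unfold Rabs at 1. destruct Rcase_abs; lra.
  - intros f p q Hfl Hl Hr. unfold line2 in Hr. subst q.
    destruct Hl as (Hfp & Hfp1 & Hfp2).
    assert (Hpq: p < 2) by lra.
    assert (Hcr := cross f p 2 p Hfl ltac:(lra) ltac:(lra)).
    split; [lra|]. split.
    { intros t t' Ht Ht'. destruct (Hcr t t' Ht Ht') as (A & B & C).
      apply Rabs_le_inv in A. split; [|split]; auto; try lra.
      unfold RegP. repeat split; lra. }
    assert (HRp: RegP p (f p)) by (unfold RegP; repeat split; lra).
    assert (HRq: RegP 2 (f 2)).
    { destruct (Hcr 2 2 ltac:(lra) ltac:(lra)) as (A & B & C).
      unfold RegP. repeat split; lra. }
    destruct (RegP_om _ _ HRp) as [Ap Ep]. destruct (RegP_om _ _ HRq) as [Aq Eq].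
    assert (Hpe: p = 2 - 10 * f p) by lra.
    assert (Ep' := Ep). rewrite Hpe in Ep' at 1.
    pose proof (P_end (f p) (omega_p p (f p)) ltac:(lra) ltac:(lra) ltac:(lra) Ep').
    destruct (endP_left (f p) (omega_p p (f p)) ltac:(lra) ltac:(lra)) as [L1 L2].
    destruct (Hcr 2 2 ltac:(lra) ltac:(lra)) as (_ & _ & Cq).
    destruct (endP_right (f 2) (omega_p 2 (f 2)) ltac:(lra) ltac:(lra)) as [R1 R2].
    rewrite <- Hpe in L1, L2.
    repeat split; auto.
Qed.

Lemma caseM : transfer_property (/10000) Wm (upperV (/1000000)) line2 (NEface (/1000000))
   (NWface (/1000000)) (NEface (/1000000)) (fun y => y).
Proof.
  apply (assemble Wm omega_m RegM).
  - intros x y. reflexivity.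
  - intros x y HR. destruct (RegM_om x y HR) as [A [B _]]. destruct HR as (Hy & _).
    rewrite Rabs_left by lra. repeat split; lra.
  - intros x1 x2 y H1 H2 H12. destruct (RegM_om _ _ H1) as [A1 [_ E1]]. destruct (RegM_om _ _ H2) as [A2 [_ E2]].
    destruct H1 as (Hy & Hx1 & Hx1'). destruct H2 as (_ & Hx2 & Hx2').
    apply (M_X x1 x2 y); auto.
  - intros x y1 y2 H1 H2. destruct (RegM_om _ _ H1) as [A1 [_ E1]]. destruct (RegM_om _ _ H2) as [A2 [_ E2]].
    destruct H1 as (Hy1 & Hx1 & Hx1'). destruct H2 as (Hy2 & _ & Hx2').
    pose proof (M_Y1 x y1 y2 _ _ Hy1 Hy2 Hx1 Hx1' A1 A2 E1 E2).
    pose proof (M_Y1 x y2 y1 _ _ Hy2 Hy1 Hx1 Hx2' A2 A1 E2 E1).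
    rewrite Rabs_minus_sym in H0.
    unfold Rabs at 1. destruct Rcase_abs; lra.
  - intros f p q Hfl Hl Hr. unfold line2 in Hl. subst p.
    destruct Hr as (Hfq & Hfq1 & Hfq2).
    assert (Hpq: 2 < q) by lra.
    assert (Hcr := cross f 2 q q Hfl ltac:(lra) ltac:(lra)).
    split; [lra|]. split.
    { intros t t' Ht Ht'. destruct (Hcr t t' Ht Ht') as (A & B & C).
      apply Rabs_le_inv in A. split; [|split]; auto; try lra.
      unfold RegM. repeat split; lra. }
    assert (HRq: RegM q (f q)) by (unfold RegM; repeat split; lra).
    assert (HRp: RegM 2 (f 2)).
    { destruct (Hcr 2 2 ltac:(lra) ltac:(lra)) as (A & B & C).
      unfold RegM. repeat split; lra. }
    destruct (RegM_om _ _ HRp) as [Ap [Bp Ep]]. destruct (RegM_om _ _ HRq) as [Aq [Bq Eq]].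
    assert (Hqe: q = 2 + 10 * f q) by lra.
    assert (Eq' := Eq). rewrite Hqe in Eq' at 1.
    pose proof (M_end (f q) (omega_m q (f q)) ltac:(lra) Bq ltac:(lra) Eq').
    destruct (endM_right (f q) (omega_m q (f q)) ltac:(lra) ltac:(lra)) as [L1 L2].
    destruct (Hcr 2 2 ltac:(lra) ltac:(lra)) as (_ & _ & Cp).
    destruct (endM_left (f 2) (omega_m 2 (f 2)) ltac:(lra) ltac:(lra)) as [R1 R2].
    rewrite <- Hqe in L1, L2.
    repeat split; auto.
Qed.


Lemma lower_red (W : R -> R -> R*R) (a L : R) LF0 RF0 LF1 RF1 LF0' RF0' LF1' RF1' :
  (forall x y, W x (-y) = (fst (W x y), - snd (W x y))) ->
  (forall x y, LF0 x y -> LF0' x (-y)) -> (forall x y, RF0 x y -> RF0' x (-y)) ->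
  (forall x y, LF1' x y -> LF1 x (-y)) -> (forall x y, RF1' x y -> RF1 x (-y)) ->
  transfer_property L W (upperV a) LF0' RF0' LF1' RF1' (fun y => y) ->
  transfer_property L W (lowerV a) LF0 RF0 LF1 RF1 Rabs.
Proof.
  intros Hs H0 H1 H2 H3 Hup f p q Hfl Hl Hr.
  set (f' := fun x => - f x).
  assert (Hff: forall t, f t = - f' t) by (intro; unfold f'; ring).
  assert (HW: forall t, W t (f t) = (fst (W t (f' t)), - snd (W t (f' t)))).
  { intro t. rewrite Hff. apply Hs. }
  destruct Hfl as [Hpq [Hlip Hin]].
  assert (Hfl': flat_arc_in L (upperV a) f' p q).
  { split; auto. split.
    - intros x y Hx Hy. unfold f'. replace (- f x - - f y) with (- (f x - f y)) by ring.
      rewrite Rabs_Ropp. auto.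
    - intros x Hx. destruct (Hin x Hx) as [[A B] C]. unfold f'. split; [split|]; try lra;
      rewrite Rabs_Ropp; auto. }
  destruct (Hup f' p q Hfl' (H0 _ _ Hl) (H1 _ _ Hr)) as (g & p1 & q1 & G1 & G2 & G3 & G4 & G5 & G6).
  destruct G1 as [Gpq [Glip Gin]].
  exists (fun x => - g x), p1, q1. split; [|split; [|split; [|split; [|split]]]].
  - split; auto. split.
    + intros x y Hx Hy. replace (- g x - - g y) with (- (g x - g y)) by ring.
      rewrite Rabs_Ropp. auto.
    + intros x Hx. destruct (Gin x Hx) as [[A B] C]. split; [split|]; try lra;
      rewrite Rabs_Ropp; auto.
  - intros x Hx. destruct (G2 x Hx) as [t [Ht Ht']]. exists t. split; auto.
    rewrite HW, Ht'. reflexivity.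
  - apply H2; auto.
  - apply H3; auto.
  - intros x t Hx Ht. destruct (Gin x Hx) as [_ C]. destruct (Hin t Ht) as [_ D].
    cbv beta. rewrite Rabs_Ropp, (Rabs_pos_eq (g x)) by lra. rewrite (Rabs_left (f t)) by lra.
    pose proof (G5 x t Hx Ht). unfold f' in H. lra.
  - intros x1 x2 Hx1 Hx2 E1 E2 x l Hx Hd.
    assert (Hfun: (fun t => fst (W t (f t))) = (fun t => fst (W t (f' t)))).
    { apply functional_extensionality. intro t. rewrite HW. reflexivity. }
    rewrite Hfun in Hd.
    refine (G6 x1 x2 Hx1 Hx2 _ _ x l Hx Hd).
    + rewrite HW in E1. injection E1. intros Ea Eb.
      rewrite (surjective_pairing (W x1 (f' x1))). rewrite Eb. f_equal. lra.
    + rewrite HW in E2. injection E2. intros Ea Eb.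
      rewrite (surjective_pairing (W x2 (f' x2))). rewrite Eb. f_equal. lra.
Qed.

Lemma omega_p_neg x y : omega_p x (-y) = omega_p x y.
Proof. unfold omega_p, Defs.Delta, r1sq. replace ((-y)^2) with (y^2) by ring. reflexivity. Qed.
Lemma omega_m_neg x y : omega_m x (-y) = omega_m x y.
Proof. unfold omega_m, Defs.Delta, r1sq. replace ((-y)^2) with (y^2) by ring. reflexivity. Qed.

Lemma Wp_neg x y : Wp x (-y) = (fst (Wp x y), - snd (Wp x y)).
Proof. unfold Wp, Wgen. rewrite omega_p_neg. simpl. f_equal. ring. Qed.
Lemma Wm_neg x y : Wm x (-y) = (fst (Wm x y), - snd (Wm x y)).
Proof. unfold Wm, Wgen. rewrite omega_m_neg. simpl. f_equal. ring. Qed.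

Theorem lemma5p3 :
  exists a L : R, 0 < a <= / 10 /\ 0 < L < / 6 /\
    transfer_property L Wp (upperV a) (NWface a) line2 (NWface a) (NEface a) (fun y => y) /\
    transfer_property L Wm (upperV a) line2 (NEface a) (NWface a) (NEface a) (fun y => y) /\
    transfer_property L Wp (lowerV a) (SWface a) line2 (SWface a) (SEface a) Rabs /\
    transfer_property L Wm (lowerV a) line2 (SEface a) (SWface a) (SEface a) Rabs.
Proof.
  exists (/1000000), (/10000).
  split; [lra|]. split; [lra|].
  split; [exact caseP|]. split; [exact caseM|]. split.
  - apply (lower_red Wp (/1000000) (/10000) _ _ _ _ (NWface (/1000000)) line2 (NWface (/1000000)) (NEface (/1000000))).
    + exact Wp_neg.
    + intros x y H. exact H.
    + intros x y H. exact H.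
    + intros x y [A B]. unfold SWface. rewrite Ropp_involutive. auto.
    + intros x y [A B]. unfold SEface. rewrite Ropp_involutive. auto.
    + exact caseP.
  - apply (lower_red Wm (/1000000) (/10000) _ _ _ _ line2 (NEface (/1000000)) (NWface (/1000000)) (NEface (/1000000))).
    + exact Wm_neg.
    + intros x y H. exact H.
    + intros x y H. exact H.
    + intros x y [A B]. unfold SWface. rewrite Ropp_involutive. auto.
    + intros x y [A B]. unfold SEface. rewrite Ropp_involutive. auto.
    + exact caseM.
Qed.
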